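(* Let $k,n\in\mathbb{N}$ with $k\ge 2$, let $\mathbb{F}\subset\mathbb{C}$ be a field, let $P\in\mathbb{F}[x]$ be a polynomial of degree $k$ with leading coefficient $1$, and let $f\colon\mathbb{F}\to\mathbb{C}$ be a generalized monomial of degree $n$. If the mapping $\mathbb{F}\ni x\mapsto f(P(x))$ is a normal polynomial, then the mapping $\mathbb{F}\ni x\mapsto f(x^k)$ is also a normal polynomial.
   Context: A function $A\colon\mathbb{F}^k\to\mathbb{C}$ is $k$-additive if it is additive (with respect to the additive group of $\mathbb{F}$) in each variable. A function $f\colon\mathbb{F}\to\mathbb{C}$ is a generalized monomial of degree $k$ if there is a symmetric $k$-additive $A\colon\mathbb{F}^k\to\mathbb{C}$ with $f(x)=A(x,\ldots,x)$ for all $x\in\mathbb{F}$. A function $p\colon\mathbb{F}\to\mathbb{C}$ is a normal polynomial if there exist $m\in\mathbb{N}$, additive functions $a_1,\ldots,a_m\colon\mathbb{F}\to\mathbb{C}$ and a complex polynomial $Q\in\mathbb{C}[x_1,\ldots,x_m]$ with $p(x)=Q(a_1(x),\ldots,a_m(x))$ for all $x\in\mathbb{F}$. *)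

(* Defs.v *)
From HB Require Import structures.
From mathcomp Require Import all_boot all_order all_algebra all_fingroup.
From mathcomp Require Import reals complex mpoly.
Set Implicit Arguments. Unset Strict Implicit. Unset Printing Implicit Defensive.
Import GRing.Theory Num.Theory.
Local Open Scope ring_scope.

Definition additive_fun (F : fieldType) (C : nmodType) (a : F -> C) : Prop :=
  forall x y, a (x + y) = a x + a y.

Definition upd (F : Type) (k : nat) (v : 'I_k -> F) (i : 'I_k) (x : F) : 'I_k -> F :=
  fun j => if j == i then x else v j.

Definition k_additive (F : fieldType) (C : nmodType) (k : nat)
  (A : ('I_k -> F) -> C) : Prop :=
  forall (i : 'I_k) (v : 'I_k -> F) (x y : F),
    A (upd v i (x + y)) = A (upd v i x) + A (upd v i y).

Definition symmetric_form (F : Type) (C : Type) (k : nat)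
  (A : ('I_k -> F) -> C) : Prop :=
  forall (s : {perm 'I_k}) (v : 'I_k -> F), A (fun j => v (s j)) = A v.

Definition generalized_monomial (F : fieldType) (C : nmodType) (k : nat)
  (f : F -> C) : Prop :=
  exists A : ('I_k -> F) -> C,
    [/\ k_additive A, symmetric_form A & forall x, f x = A (fun _ => x)].

Definition normal_polynomial (F : fieldType) (C : comRingType) (p : F -> C) : Prop :=
  exists (m : nat) (a : 'I_m -> F -> C) (Q : {mpoly C[m]}),
    (forall i, additive_fun (a i)) /\
    forall x, p x = Q.@[fun i => a i x].

(* Main.v *)
Require Import Defs.
From HB Require Import structures.
From mathcomp Require Import all_boot all_order all_algebra all_fingroup.
From mathcomp Require Import reals complex mpoly.
From mathcomp Require Import zify.
From Stdlib Require Import FunctionalExtensionality.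
Import GRing.Theory Num.Theory.
Local Open Scope ring_scope.

Lemma A_upd0 {F : fieldType} {C : zmodType} {n} {A : ('I_n -> F) -> C} :
  k_additive A -> forall i v, A (upd v i 0) = 0.
Proof.
move=> hA i v; have h := hA i v 0 0; rewrite addr0 in h.
by apply: (@addrI _ (A (upd v i 0))); rewrite addr0 -h.
Qed.

Lemma A_sum {F : fieldType} {C : zmodType} {n} {A : ('I_n -> F) -> C} :
  k_additive A -> forall i v m (z : 'I_m -> F),
  A (upd v i (\sum_(j < m) z j)) = \sum_(j < m) A (upd v i (z j)).
Proof.
move=> hA i v; elim=> [|m IH] z; first by rewrite !big_ord0 (A_upd0 hA).
by rewrite !big_ord_recr /= hA IH.
Qed.

Lemma A_muln {F : fieldType} {C : zmodType} {n} {A : ('I_n -> F) -> C} :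
  k_additive A -> forall i v z r, A (upd v i (z *+ r)) = A (upd v i z) *+ r.
Proof.
move=> hA i v z; elim=> [|r IH]; first by rewrite !mulr0n (A_upd0 hA).
by rewrite !mulrS hA IH.
Qed.

Lemma main_exp {F : fieldType} {C : fieldType} {n} {A : ('I_n -> F) -> C}
  (hA : k_additive A) {P : {poly F}} {k} (hsz : size P = k.+1) (hm : P \is monic)
  (x : F) :
  forall s, (s <= n)%N -> forall y : 'I_n -> F,
  {p : {poly C} | [/\ forall t, (k * s < t)%N -> p`_t = 0,
    p`_(k * s) = A (fun i => if (i < s)%N then x ^+ k else y i) &
    forall r : nat, A (fun i => if (i < s)%N then P.[r%:R * x] else y i) = p.[r%:R] ]}.
Proof.
elim=> [|s IH] hs y.
  exists (A y)%:P; split.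
  - by move=> t ht; rewrite muln0 in ht; rewrite coefC gtn_eqF.
  - rewrite muln0 coefC eqxx; congr (A _); try by apply: functional_extensionality => i; rewrite ltn0.
  - move=> r; rewrite hornerC; congr (A _); try by apply: functional_extensionality => i; rewrite ltn0.
have hs' : (s < n)%N := hs.
pose i0 : 'I_n := Ordinal hs'.
have L1 : forall (w z : F) y', (fun i : 'I_n => if (i < s)%N then w else upd y' i0 z i)
   = upd (fun i : 'I_n => if (i < s)%N then w else y' i) i0 z.
  move=> w z y'; apply: functional_extensionality => i; rewrite /upd.
  by case: eqP => [->|_] //=; rewrite ltnn.
have L2 : forall (w : F) (y' : 'I_n -> F), upd (fun i : 'I_n => if (i < s)%N then w else y' i) i0 w
   = (fun i : 'I_n => if (i < s.+1)%N then w else y' i).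
  move=> w y'; apply: functional_extensionality => i; rewrite /upd.
  case: (eqVneq i i0) => [->|ne]; first by rewrite /= ltnS leqnn.
  have hne : (nat_of_ord i != s).
    apply: contra ne => /eqP e; apply/eqP/val_inj; exact: e.
  have hlt : (i < s.+1)%N = (i < s)%N by rewrite ltnS leq_eqVlt (negbTE hne).
  by rewrite hlt.
pose pj := fun j : 'I_k.+1 => sval (IH (ltnW hs) (upd y i0 (P`_j * x ^+ j))).
have Hp : forall j : 'I_k.+1, [/\ forall t, (k * s < t)%N -> (pj j)`_t = 0,
    (pj j)`_(k * s) = A (fun i => if (i < s)%N then x ^+ k else upd y i0 (P`_j * x ^+ j) i) &
    forall r : nat, A (fun i => if (i < s)%N then P.[r%:R * x] else upd y i0 (P`_j * x ^+ j) i)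
       = (pj j).[r%:R]].
  by move=> j; exact: (svalP (IH (ltnW hs) (upd y i0 (P`_j * x ^+ j)))).
have Pk : P`_k = 1.
  by move: hm; rewrite monicE lead_coefE hsz => /eqP.
exists (\sum_(j < k.+1) pj j * 'X^j); split.
- move=> t ht; rewrite coef_sum big1 // => j _; rewrite coefMXn.
  case: ifP => // _; have [h0 _ _] := Hp j; apply: h0.
  have := ltn_ord j; rewrite mulnS in ht; lia.
- rewrite coef_sum (bigD1 ord_max) //= big1 ?addr0.
    rewrite coefMXn ifF; last by apply/negbTE; rewrite -leqNgt mulnS leq_addr.
    have -> : (k * s.+1 - k = k * s)%N by rewrite mulnS addKn.
    have [_ -> _] := Hp ord_max.
    by rewrite /= Pk mul1r L1 L2.
  move=> j hj; rewrite coefMXn; case: ifP => // hlt; have [h0 _ _] := Hp j; apply: h0.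
  have hjk : (j < k)%N.
    have := ltn_ord j; rewrite ltnS leq_eqVlt => /orP[/eqP e|//].
    by case/eqP: hj; apply: val_inj.
  move/negbT: hlt; rewrite -leqNgt mulnS => hlt; lia.
- move=> r.
  transitivity (A (upd (fun i : 'I_n => if (i < s)%N then P.[r%:R * x] else y i) i0
       (\sum_(j < k.+1) (P`_j * x ^+ j) *+ (r ^ j)))).
    rewrite -L2; congr (A (upd _ _ _)).
    rewrite horner_coef hsz; apply: eq_bigr => j _.
    by rewrite exprMn -natrX mulrCA mulr_natl.
  rewrite (A_sum hA) horner_sum; apply: eq_bigr => j _.
  rewrite (A_muln hA) -L1; have [_ _ ->] := Hp j.
  by rewrite hornerM hornerXn -natrX mulr_natr.
Qed.

Theorem lemma4 (R : realType) (F : fieldType) (iota : {rmorphism F -> R[i]})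
  (k n : nat) (P : {poly F}) (f : F -> R[i]) :
  (2 <= k)%N -> size P = k.+1 -> P \is monic ->
  generalized_monomial n f ->
  normal_polynomial (fun x => f P.[x]) ->
  normal_polynomial (fun x => f (x ^+ k)).
Proof.
move=> hk hsz hm [A [hA hsym hf]] [m [a [Q [ha hQ]]]].
have hax : forall i (r : nat) x, a i (r%:R * x) = a i x *+ r.
  move=> i r x; rewrite mulr_natl; elim: r => [|r IH].
    have h := ha i 0 0; rewrite addr0 in h.
    by rewrite !mulr0n; apply: (@addrI _ (a i 0)); rewrite addr0 -h.
  by rewrite !mulrS ha IH.
exists m, a, (\sum_(mm <- msupp Q) ((mdeg mm == (k * n)%N)%:R * Q@_mm) *: 'X_[mm]).
split=> // x.
case: (main_exp hA hsz hm x n (leqnn n) (fun _ => 0)) => p [h0 h1 h2].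
have E : forall w : F, (fun i : 'I_n => if (i < n)%N then w else 0) = fun _ => w.
  by move=> w; apply: functional_extensionality => i; rewrite ltn_ord.
rewrite E -hf in h1.
have h2' : forall r : nat, f P.[r%:R * x] = p.[r%:R].
  by move=> r; rewrite -h2 E hf.
pose b := fun i => a i x.
pose Rt := \sum_(mm <- msupp Q) (Q@_mm * \prod_i b i ^+ mm i) *: 'X^(mdeg mm).
have hR : forall r : nat, p.[r%:R] = Rt.[r%:R].
  move=> r; rewrite -h2' hQ mevalE horner_sum; apply: eq_bigr => mm _.
  rewrite hornerZ hornerXn -mulrA; congr (_ * _).
  rewrite (eq_bigr (fun i => b i ^+ mm i * (r%:R) ^+ mm i)); last first.
    by move=> i _; rewrite hax -[a i x *+ r]mulr_natr exprMn.
  by rewrite big_split /= prodrXr mdegE.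
have hD : p = Rt.
  apply/eqP; rewrite -subr_eq0; apply/eqP.
  case: (eqVneq (p - Rt) 0) => // nz; exfalso.
  pose rs : seq R[i] := [seq i%:R | i <- seq.iota 0 (size (p - Rt))].
  have hr : all (root (p - Rt)) rs.
    by apply/allP => z /mapP [i _ ->]; rewrite /root hornerD hornerN hR subrr.
  have hu : uniq rs.
    by rewrite map_inj_uniq ?iota_uniq // => i j /eqP; rewrite eqr_nat => /eqP.
  have := max_poly_roots nz hr hu.
  by rewrite /rs size_map size_iota ltnn.
rewrite -h1 hD coef_sum (big_morph (meval (a^~ x)) (mevalD _) (meval0 _)); apply: eq_bigr => mm _.
rewrite mevalZ mevalX coefZ coefXn eq_sym.
by rewrite mulrC mulrA.
Qed.
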